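(* For $k\geq 1$ define the formal power series $$\psi_k(t)=\mu(k)\,(z_2;q)_k\sum_{j=k}^{\infty}\frac{(q^{j-k+1};q)_k}{(q^jz_2;q)_k}\,t^j,\qquad \mu(k)=(-1)^k\frac{q^{\binom{k}{2}}}{(q;q)_k}\,\frac{1-q^{2k-1}z_2}{1-q^{k-1}z_2},$$ and let $f_k(t)=\sum_{j\geq k}\rho(k,j)t^j$ for $k\geq 0$, where $\rho(k,j)=m_j/v'_{j+1}(x_k)$. Then for every $k\geq 1$, $f_k(t)$ is the Hadamard (coefficientwise) product of $f_0(t)$ and $\psi_k(t)$, i.e. $\rho(k,j)$ equals $\rho(0,j)$ times the coefficient of $t^j$ in $\psi_k(t)$, for all $j\geq k$.
   Context: Fix $q\in\mathbb{C}$ with $q\neq 0$ and $|q|\neq 1$. Fix complex parameters $a_1,a_2,b_0,b_1,b_2,s_1,s_2$ with $a_2\neq0$, $b_2\neq0$, put $s_0=-s_1-s_2$, and for $k\geq 0$ define $x_k=b_0+b_1q^k+b_2q^{-k}$, $h_k=a_1q^k+a_2q^{-k}$, $d_k=s_0+s_1q^k+s_2q^{-k}$; assume the $h_k$ are pairwise distinct and the $x_k$ are pairwise distinct. Let $g_0=0$ and $g_k=x_{k-1}(h_k-h_0)+d_k$ for $k\geq 1$. Let $v_n(t)=\prod_{i=0}^{n-1}(t-x_i)$, so $v_{j+1}'(x_k)=\prod_{i=0,\,i\neq k}^{j}(x_k-x_i)$. Define $m_0=1$, $m_j=\prod_{i=1}^{j}\frac{g_i}{h_0-h_i}$. Put $z_2=qb_1/b_2$.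 $(t;q)_k=\prod_{i=0}^{k-1}(1-q^it)$. *)

(* Defs.v *)
From HB Require Import structures.
From mathcomp Require Import all_boot all_order all_algebra.
Set Implicit Arguments. Unset Strict Implicit. Unset Printing Implicit Defensive.
Import Order.TTheory GRing.Theory Num.Theory.
Local Open Scope ring_scope.

(* Complex numbers are modelled by an arbitrary numClosedFieldType C
   (the complex numbers are an instance). *)
Section Defs.
Variable C : numClosedFieldType.
Variables (q a1 a2 b0 b1 b2 s1 s2 : C).

Definition s0 : C := - s1 - s2.
Definition xk (k : nat) : C := b0 + b1 * q ^+ k + b2 * q ^- k.
Definition hk (k : nat) : C := a1 * q ^+ k + a2 * q ^- k.
Definition dk (k : nat) : C := s0 + s1 * q ^+ k + s2 * q ^- k.
Definition gk (k : nat) : C :=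
  if k is k'.+1 then xk k' * (hk k - hk 0) + dk k else 0.
Definition mj (j : nat) : C := \prod_(1 <= i < j.+1) (gk i / (hk 0 - hk i)).
(* v'_{j+1}(x_k) = prod_{i=0, i<>k}^{j} (x_k - x_i) *)
Definition vprime (j k : nat) : C :=
  \prod_(0 <= i < j.+1 | i != k) (xk k - xk i).
Definition rho (k j : nat) : C := mj j / vprime j k.
(* coefficient of t^j in f_k(t) *)
Definition fcoef (k j : nat) : C := if (k <= j)%N then rho k j else 0.

Definition z2 : C := q * b1 / b2.
Definition qpoch (t : C) (k : nat) : C := \prod_(i < k) (1 - q ^+ i * t).
Definition mu (k : nat) : C :=
  (-1) ^+ k * q ^+ 'C(k, 2) / qpoch q k
  * ((1 - q ^+ (k.*2.-1) * z2) / (1 - q ^+ k.-1 * z2)).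
(* coefficient of t^j in psi_k(t) *)
Definition psicoef (k j : nat) : C :=
  if (k <= j)%N then
    mu k * qpoch z2 k * (qpoch (q ^+ (j - k).+1) k / qpoch (q ^+ j * z2) k)
  else 0.
End Defs.

(* Main.v *)
Require Import Defs.
From HB Require Import structures.
From mathcomp Require Import all_boot all_order all_algebra.
From mathcomp Require Import ring zify.
Import Order.TTheory GRing.Theory Num.Theory.
Local Open Scope ring_scope.

Lemma qpochS (C : numClosedFieldType) (q t : C) k :
  qpoch q t k.+1 = (1 - t) * qpoch q (q * t) k.
Proof.
rewrite /qpoch big_ord_recl /= expr0 mul1r; congr (_ * _).
by apply: eq_bigr => i _; rewrite /bump /= add1n exprSr mulrA.
Qed.

Lemma qpochSr (C : numClosedFieldType) (q t : C) k :
  qpoch q t k.+1 = qpoch q t k * (1 - q ^+ k * t).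
Proof. by rewrite /qpoch big_ord_recr. Qed.

Lemma qpoch_shift (C : numClosedFieldType) (q t : C) k :
  (1 - t) * qpoch q (q * t) k = qpoch q t k * (1 - q ^+ k * t).
Proof. by rewrite -qpochS qpochSr. Qed.

Lemma dx (C : numClosedFieldType) (q b0 b1 b2 : C) k i : q != 0 ->
  xk q b0 b1 b2 k - xk q b0 b1 b2 i = (q ^+ k - q ^+ i) * (b1 - b2 / q ^+ (k + i)).
Proof.
move=> q0; have hk : q ^+ k != 0 by rewrite expf_neq0.
have hi : q ^+ i != 0 by rewrite expf_neq0.
rewrite /xk exprD; field; by rewrite hk hi.
Qed.

Lemma vprime_k (C : numClosedFieldType) (q b0 b1 b2 : C) k :
  vprime q b0 b1 b2 k k = \prod_(i < k) (xk q b0 b1 b2 k - xk q b0 b1 b2 i).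
Proof.
rewrite /vprime big_mkcond big_nat_recr //= eqxx mulr1 big_mkord.
by apply: eq_bigr => i _; rewrite ifT // neq_ltn ltn_ord.
Qed.

Lemma vprime_0 (C : numClosedFieldType) (q b0 b1 b2 : C) k :
  vprime q b0 b1 b2 k 0 = \prod_(i < k) (xk q b0 b1 b2 0 - xk q b0 b1 b2 i.+1).
Proof.
rewrite /vprime big_mkcond big_nat_recl //= mul1r big_mkord.
by apply: eq_bigr => i _.
Qed.

Lemma vprime_S (C : numClosedFieldType) (q b0 b1 b2 : C) j k : (k <= j)%N ->
  vprime q b0 b1 b2 j.+1 k = vprime q b0 b1 b2 j k * (xk q b0 b1 b2 k - xk q b0 b1 b2 j.+1).
Proof.
move=> kj; rewrite /vprime big_mkcond big_nat_recr //= -big_mkcond ifT //.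
by rewrite eq_sym neq_ltn ltnS kj.
Qed.

Lemma prod_q (C : numClosedFieldType) (q : C) k :
  \prod_(i < k) (q ^+ k - q ^+ i) = (-1) ^+ k * q ^+ 'C(k, 2) * qpoch q q k.
Proof.
elim: k => [|k IH]; first by rewrite big_ord0 /qpoch big_ord0 !expr0 !mul1r.
rewrite big_ord_recl /=.
rewrite (eq_bigr (fun i : 'I_k => q * (q ^+ k - q ^+ i))); last first.
  by move=> i _; rewrite /bump /= !add1n !exprS mulrBr.
rewrite big_split /= prodr_const card_ord IH qpochSr binS bin1 exprD !exprS expr0.
ring.
Qed.

Lemma sum_lin m k : (\sum_(i < k) (m + i) = m * k + 'C(k, 2))%N.
Proof. by rewrite big_split /= sum_nat_const card_ord -bin2_sum big_mkord mulnC. Qed.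

Lemma prod_b (C : numClosedFieldType) (q b1 b2 : C) m k : q != 0 -> b2 != 0 -> (0 < m)%N ->
  \prod_(i < k) (b1 - b2 / q ^+ (m + i))
  = (- b2) ^+ k / q ^+ (m * k + 'C(k, 2)) * qpoch q (q ^+ m.-1 * z2 q b1 b2) k.
Proof.
move=> q0 b20; case: m => // m _.
rewrite (eq_bigr (fun i : 'I_k => (- b2) * (q ^+ (m.+1 + i))^-1 * (1 - q ^+ i * (q ^+ m.+1.-1 * z2 q b1 b2)))); last first.
  move=> i _; rewrite /z2 /= addSn exprS exprD.
  have h1 : q ^+ m != 0 by rewrite expf_neq0.
  have h2 : q ^+ i != 0 by rewrite expf_neq0.
  field; by rewrite b20 h1 h2 q0.
rewrite !big_split /= prodr_const card_ord prodfV prodrXr sum_lin.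
by [].
Qed.
Lemma nz_facts (C : numClosedFieldType) (q b0 b1 b2 : C) : q != 0 -> b2 != 0 ->
  injective (xk q b0 b1 b2) ->
  (forall n, (0 < n)%N -> 1 - q ^+ n != 0) /\ (forall n, 1 - q ^+ n * z2 q b1 b2 != 0).
Proof.
move=> q0 b20 xi; split.
  move=> n n0; apply/eqP => h.
  have : xk q b0 b1 b2 n = xk q b0 b1 b2 0.
    by apply/eqP; rewrite -subr_eq0 dx // expr0 -opprB h oppr0 mul0r.
  by move/xi => e; rewrite e in n0.
move=> n; apply/eqP => h.
have : xk q b0 b1 b2 n.+1 = xk q b0 b1 b2 0.
  apply/eqP; rewrite -subr_eq0 dx // addn0.
  have hn : q ^+ n != 0 by rewrite expf_neq0.
  have e : b1 - b2 / q ^+ n.+1 = - (b2 / q ^+ n.+1) * (1 - q ^+ n * z2 q b1 b2).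
    rewrite /z2 exprS; field; by rewrite q0 hn b20.
  by rewrite e h !mulr0.
by move/xi.
Qed.
Lemma qpoch_neq0 (C : numClosedFieldType) (q t : C) k :
  (forall i, (i < k)%N -> 1 - q ^+ i * t != 0) -> qpoch q t k != 0.
Proof.
move=> h; rewrite /qpoch; apply/prodf_neq0 => i _; exact: h.
Qed.

Lemma bin2_dbl n : ('C(n, 2) * 2 + n = n * n)%N.
Proof. elim: n => // n IH; rewrite binS bin1; nia. Qed.

Lemma base (C : numClosedFieldType) (q b0 b1 b2 : C) : q != 0 -> b2 != 0 ->
  (forall n, (0 < n)%N -> 1 - q ^+ n != 0) -> (forall n, 1 - q ^+ n * z2 q b1 b2 != 0) ->
  forall k, (0 < k)%N ->
  vprime q b0 b1 b2 k 0%N = vprime q b0 b1 b2 k k *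
    (mu q b1 b2 k * qpoch q (z2 q b1 b2) k *
     (qpoch q (q ^+ (k - k).+1) k / qpoch q (q ^+ k * z2 q b1 b2) k)).
Proof.
move=> q0 b20 hq hz k k0.
rewrite vprime_0 vprime_k subnn expr1.
rewrite (eq_bigr (fun i : 'I_k => (1 - q ^+ i * q) * (b1 - b2 / q ^+ (1 + i)))); last first.
  by move=> i _; rewrite dx // expr0 add0n add1n exprSr.
rewrite [X in _ = X * _](eq_bigr (fun i : 'I_k => (q ^+ k - q ^+ i) * (b1 - b2 / q ^+ (k + i)))); last first.
  by move=> i _; rewrite dx.
rewrite !big_split /= prod_q prod_b // prod_b // expr0 mul1r mul1n -/(qpoch q q k).
case: k k0 => // k _ /=.
set z := z2 q b1 b2.
have hQ : qpoch q q k.+1 != 0.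
  by apply: qpoch_neq0 => i _; rewrite -exprSr hq.
have hT : qpoch q (q ^+ k * z) k.+1 != 0.
  by apply: qpoch_neq0 => i _; rewrite mulrA -exprD hz.
have hS : qpoch q z k.+1 != 0.
  by apply: qpoch_neq0 => i _; rewrite hz.
have hU := @qpoch_shift C q (q ^+ k * z) k.+1.
rewrite mulrA -exprS in hU.
have hV : 1 - q ^+ k * z != 0 by rewrite hz.
have hW : 1 - q ^+ k.+1 * (q ^+ k * z) != 0 by rewrite mulrA -exprD hz.
have -> : qpoch q (q ^+ k.+1 * z) k.+1 = qpoch q (q ^+ k * z) k.+1 * (1 - q ^+ k.+1 * (q ^+ k * z)) / (1 - q ^+ k * z).
  by rewrite -hU; field.
rewrite /mu -/z /= (_ : (k.*2.+1 = k.+1 + k)%N); last by lia.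
rewrite exprD -mulrA.
rewrite (_ : (k.+1 * k.+1 + 'C(k.+1, 2) = (k.+1 + 'C(k.+1, 2)) + 'C(k.+1, 2) + 'C(k.+1, 2))%N); last first.
  have := bin2_dbl k.+1; nia.
have hs : (-1) ^+ k.+1 * (-1) ^+ k.+1 = 1 :> C by rewrite -exprD addnn -mul2n exprM sqrrN !expr1n.
apply/(@mulIf _ ((-1) ^+ k.+1 * (-1) ^+ k.+1)); first by rewrite hs oner_eq0.
rewrite [in RHS]hs mulr1 !exprD.
have hqk : q ^+ k != 0 by rewrite expf_neq0.
have hc : q ^+ 'C(k.+1, 2) != 0 by rewrite expf_neq0.
have hs1 : (-1) ^+ k.+1 != 0 :> C by rewrite expf_neq0 // oppr_eq0 oner_eq0.
field.
by rewrite hV hW hT hQ /= !expf_neq0.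
Qed.
Lemma key (C : numClosedFieldType) (q b0 b1 b2 : C) : q != 0 -> b2 != 0 ->
  (forall n, (0 < n)%N -> 1 - q ^+ n != 0) -> (forall n, 1 - q ^+ n * z2 q b1 b2 != 0) ->
  forall k n, (0 < k)%N ->
  vprime q b0 b1 b2 (k + n) 0%N = vprime q b0 b1 b2 (k + n) k *
    (mu q b1 b2 k * qpoch q (z2 q b1 b2) k *
     (qpoch q (q ^+ (k + n - k).+1) k / qpoch q (q ^+ (k + n) * z2 q b1 b2) k)).
Proof.
move=> q0 b20 hq hz k n k0; elim: n => [|n IH]; first by rewrite addn0 base.
rewrite addnS !vprime_S ?leq_addr // IH -!mulrA; congr (_ * _).
rewrite (_ : ((k+n).+1 - k = n.+1)%N); last by lia.
rewrite (_ : ((k+n) - k = n)%N); last by lia.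
set z := z2 q b1 b2.
have hU := @qpoch_shift C q (q ^+ (k + n) * z) k.
have hT := @qpoch_shift C q (q ^+ n.+1) k.
rewrite mulrA -exprS in hU; rewrite -exprS in hT.
have h1 : 1 - q ^+ n.+1 != 0 by rewrite hq.
have h2 : 1 - q ^+ (k + n) * z != 0 by rewrite hz.
have h3 : 1 - q ^+ k * (q ^+ (k + n) * z) != 0 by rewrite mulrA -exprD hz.
have h4 : qpoch q (q ^+ (k + n) * z) k != 0.
  by apply: qpoch_neq0 => i _; rewrite mulrA -exprD hz.
set T' := qpoch q (q ^+ n.+2) k.
set U' := qpoch q (q ^+ (k + n).+1 * z) k.
have -> : T' = qpoch q (q ^+ n.+1) k * (1 - q ^+ k * q ^+ n.+1) / (1 - q ^+ n.+1).
  by rewrite -hT -/T'; field.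
have -> : U' = qpoch q (q ^+ (k + n) * z) k * (1 - q ^+ k * (q ^+ (k + n) * z)) / (1 - q ^+ (k + n) * z).
  by rewrite -hU -/U'; field.
rewrite !dx // expr0 add0n.
have hk : q ^+ k != 0 by rewrite expf_neq0.
have hn : q ^+ n != 0 by rewrite expf_neq0.
clear IH hU hT; rewrite /T' /U' /z /z2 in h1 h2 h3 h4 *; clear T' U' z.
rewrite ?(exprS, exprD) in h1 h2 h3 h4 *.
have hb : forall X, 1 - X * (q * b1 / b2) != 0 -> b2 - X * (q * b1) != 0.
  move=> X hX; have -> : b2 - X * (q * b1) = b2 * (1 - X * (q * b1 / b2)).
    by field; rewrite b20.
  by rewrite mulf_neq0.
have h5 := hz k.-1; rewrite /z2 in h5.
have hQ : qpoch q q k != 0 by apply: qpoch_neq0 => i _; rewrite -exprSr hq.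
field.
rewrite b20 h4 h1 hQ hn hk q0 /=.
have h3' : 1 - (q ^+ k * (q ^+ k * q ^+ n)) * (q * b1 / b2) != 0 by rewrite -mulrA.
have := hb _ h3'; rewrite -mulrA => ->.
by rewrite (hb _ h2) (hb _ h5).
Qed.
Lemma vprime_neq0 (C : numClosedFieldType) (q b0 b1 b2 : C) j k :
  injective (xk q b0 b1 b2) -> vprime q b0 b1 b2 j k != 0.
Proof.
move=> xi; rewrite /vprime prodf_seq_neq0; apply/allP => i _; apply/implyP => ik.
by rewrite subr_eq0; apply/eqP => /xi e; rewrite e eqxx in ik.
Qed.

Theorem mainTheorem5 (C : numClosedFieldType) (q a1 a2 b0 b1 b2 s1 s2 : C) :
  q != 0 -> `|q| != 1 -> a2 != 0 -> b2 != 0 ->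
  injective (hk q a1 a2) ->
  injective (xk q b0 b1 b2) ->
  forall k : nat, (1 <= k)%N ->
  forall j : nat,
    fcoef q a1 a2 b0 b1 b2 s1 s2 k j
    = fcoef q a1 a2 b0 b1 b2 s1 s2 0 j * psicoef q b1 b2 k j.
Proof.
move=> q0 q1 a20 b20 hinj xinj k k1 j.
have [hq hz] := @nz_facts C q b0 b1 b2 q0 b20 xinj.
rewrite /fcoef /psicoef leq0n; case: (leqP k j) => kj; last by rewrite mulr0.
rewrite /rho -(subnKC kj).
have e := @key C q b0 b1 b2 q0 b20 hq hz k (j - k) k1.
have hv0 := @vprime_neq0 C q b0 b1 b2 (k + (j - k)) 0%N xinj.
have hvk := @vprime_neq0 C q b0 b1 b2 (k + (j - k)) k xinj.
move: hv0; rewrite e mulf_eq0 negb_or => /andP [_ hP].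
move: hP hvk; set P := (mu q b1 b2 k * _ * _); set V := vprime _ _ _ _ _ k => hP hvk.
field.
by rewrite hP hvk.
Qed.
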